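(* Let $P_0=(|P_0|,\preccurlyeq_0)$ be a finite poset with $|P_0|=\{x_1,\dots,x_{m_0}\}$ and let $S\subseteq|P_0|$. Fix nonnegative integer values of $m_i$ for all $i$ with $x_i\notin S$, and consider $L_+(P_0;m_1,\dots,m_{m_0})$ as a function of the remaining variables $(m_i)_{x_i\in S}$ ranging over nonnegative integers. If $S$ is a chain in $P_0$, then (for every choice of the fixed values) this function is given by a polynomial with rational coefficients in the variables $(m_i)_{x_i\in S}$; if $S$ is not a chain, then (for every choice of the fixed values) it is not given by any such polynomial.
   Context: For nonnegative integers $m_1,\dots,m_{m_0}$ let $C_1,\dots,C_{m_0}$ be pairwise disjoint chains, $C_i$ being $x_{i,1}<\dots<x_{i,m_i}$. The lexicographic sum $P=P_0*(C_1,\dots,C_{m_0})$ is the poset on $\bigcup_i|C_i|$ with $x_{i,j}\preccurlyeq x_{i',j'}$ iff either $i\ne i'$ and $x_i\preccurlyeq_0x_{i'}$, or $i=i'$ and $j\le j'$. $L_+(P_0;m_1,\dots,m_{m_0})$ is the number of linearizations (total orders refining $\preccurlyeq$) of $P$. *)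

(* Defs.v *)
From HB Require Import structures.
From mathcomp Require Import all_boot all_order all_algebra.
Set Implicit Arguments. Unset Strict Implicit. Unset Printing Implicit Defensive.
Import GRing.Theory Num.Theory.

Definition is_partial_order (T : finType) (le : rel T) : Prop :=
  reflexive le /\ antisymmetric le /\ transitive le.

Definition is_chain (T : finType) (le : rel T) (S : {set T}) : Prop :=
  forall x y, x \in S -> y \in S -> le x y || le y x.

(* Ground set of the lexicographic sum P0 * (C_1,...,C_m0): the element
   (i, j) stands for x_{i, j+1}, the (j+1)-th element of the chain C_i. *)
Definition lexsum_carrier (m0 : nat) (m : 'I_m0 -> nat) : finType :=
  {i : 'I_m0 & 'I_(m i)}.

Definition lexsum_le (m0 : nat) (le0 : rel 'I_m0) (m : 'I_m0 -> nat)
    (x y : lexsum_carrier m) : bool :=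
  ((tag x != tag y) && le0 (tag x) (tag y))
  || ((tag x == tag y) && (nat_of_ord (tagged x) <= nat_of_ord (tagged y))).

Definition is_linearization (T : finType) (le : rel T) (R : {set T * T}) : bool :=
  [&& [forall x, (x, x) \in R],
      [forall x, forall y, ((x, y) \in R) && ((y, x) \in R) ==> (x == y)],
      [forall x, forall y, forall z, ((x, y) \in R) && ((y, z) \in R) ==> ((x, z) \in R)],
      [forall x, forall y, ((x, y) \in R) || ((y, x) \in R)] &
      [forall x, forall y, le x y ==> ((x, y) \in R)]].

Definition Lplus (m0 : nat) (le0 : rel 'I_m0) (m : 'I_m0 -> nat) : nat :=
  #|[pred R : {set lexsum_carrier m * lexsum_carrier m} |
      is_linearization (@lexsum_le m0 le0 m) R]|.

(* A polynomial with rational coefficients in the variables (m_i)_{i in S}: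
   coefficients c indexed by exponent vectors e with entries < d.+1;
   only the variables with index in S occur. *)
Definition poly_eval (m0 : nat) (S : {set 'I_m0}) (d : nat)
    (c : {ffun {ffun 'I_m0 -> 'I_d.+1} -> rat}) (m : 'I_m0 -> nat) : rat :=
  \sum_(e : {ffun 'I_m0 -> 'I_d.+1})
     c e * \prod_(i in S) ((m i)%:R ^+ (e i : nat)).

Definition Lplus_polynomial_in (m0 : nat) (le0 : rel 'I_m0) (S : {set 'I_m0})
    (mfix : 'I_m0 -> nat) : Prop :=
  exists (d : nat) (c : {ffun {ffun 'I_m0 -> 'I_d.+1} -> rat}),
    forall m : 'I_m0 -> nat,
      (forall i, i \notin S -> m i = mfix i) ->
      ((Lplus le0 m)%:R : rat) = poly_eval S c m.

(* Main.v *)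
Require Import Defs.
From HB Require Import structures.
From mathcomp Require Import all_boot all_order all_algebra.
From mathcomp Require Import zify ring.
From Stdlib Require Import FunctionalExtensionality.
Set Implicit Arguments. Unset Strict Implicit. Unset Printing Implicit Defensive.

Section Lin.
Variable T : finType.
Variable le : rel T.

Lemma linE (R : {set T * T}) : is_linearization le R ->
  [/\ forall x, (x,x) \in R, forall x y, (x,y) \in R -> (y,x) \in R -> x = y,
     forall x y z, (x,y) \in R -> (y,z) \in R -> (x,z) \in R,
     forall x y, ((x,y) \in R) || ((y,x) \in R) & forall x y, le x y -> (x,y) \in R].
Proof.
case/and5P=> /forallP h1 h2 h3 /forallP h4 h5; split=> //.
- move=> x y Hxy Hyx; move/forallP: h2 => /(_ x) /forallP /(_ y) /implyP.
  by rewrite Hxy Hyx => /(_ isT) /eqP.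
- move=> x y z Hxy Hyz; move/forallP: h3 => /(_ x) /forallP /(_ y) /forallP /(_ z) /implyP.
  by rewrite Hxy Hyz => /(_ isT).
- by move=> x y; move/forallP: (h4 x) => /(_ y).
- move=> x y Hxy; move/forallP: h5 => /(_ x) /forallP /(_ y) /implyP; exact.
Qed.

Lemma linI (R : {set T * T}) :
  (forall x, (x,x) \in R) -> (forall x y, (x,y) \in R -> (y,x) \in R -> x = y) ->
  (forall x y z, (x,y) \in R -> (y,z) \in R -> (x,z) \in R) ->
  (forall x y, ((x,y) \in R) || ((y,x) \in R)) -> (forall x y, le x y -> (x,y) \in R) ->
  is_linearization le R.
Proof.
move=> h1 h2 h3 h4 h5; apply/and5P; split.
- by apply/forallP.
- apply/forallP=> x; apply/forallP=> y; apply/implyP=> /andP[a b]; apply/eqP; exact: h2.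
- apply/forallP=> x; apply/forallP=> y; apply/forallP=> z; apply/implyP=> /andP[a b]; exact: h3 a b.
- apply/forallP=> x; apply/forallP=> y; exact: h4.
- apply/forallP=> x; apply/forallP=> y; apply/implyP; exact: h5.
Qed.

Definition topR (R : {set T * T}) t := [forall y, (y, t) \in R].
Definition maxl t := [forall y, le t y ==> (y == t)].

Lemma top_exists (x0 : T) R : is_linearization le R -> exists t, topR R t.
Proof.
case/linE=> h1 h2 h3 h4 h5.
pose F t := #|[set y | (y, t) \in R]|.
case: (@arg_maxnP T x0 predT F isT) => t _ Ht.
exists t; apply/forallP=> y; apply: contraT => Hyt.
have Hty : (t, y) \in R by move: (h4 t y); rewrite (negbTE Hyt) orbF.
have : F t < F y.
  apply: proper_card; apply/properP; split.
    apply/subsetP=> z; rewrite !inE => Hz; exact: h3 Hz Hty.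
  by exists y; rewrite !inE ?h1 // (negbTE Hyt).
by move=> H; move: (Ht y isT); rewrite /= leqNgt H.
Qed.

Lemma card_lin_top (x0 : T) :
  #|[pred R : {set T * T} | is_linearization le R]| =
  \sum_(t | maxl t) #|[pred R : {set T * T} | is_linearization le R && topR R t]|.
Proof.
rewrite -sum1_card.
rewrite [RHS](eq_bigr (fun t => \sum_(R in [pred R : {set T*T} | is_linearization le R && topR R t]) 1)); last by move=> t _; rewrite sum1_card.
rewrite (exchange_big_dep (fun R : {set T * T} => is_linearization le R)) /=; last first.
  by move=> t R _; rewrite inE => /andP[].
apply: eq_bigr => R HR.
have {}HR : is_linearization le R by move: HR; rewrite inE.
have [t Ht] := top_exists x0 HR.
rewrite (big_pred1 t) // => u /=.
rewrite ?inE HR /=.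
case/linE: HR => h1 h2 h3 h4 h5.
apply/idP/idP.
- case/andP=> _ Hu; apply/eqP; apply: h2.
  + by move/forallP: Ht; apply.
  + by move/forallP: Hu; apply.
- move/eqP=> ->; rewrite Ht andbT; apply/forallP=> y; apply/implyP=> Hty.
  apply/eqP; apply: h2; last exact: h5.
  by move/forallP: Ht; apply.
Qed.

End Lin.

Section Remove.
Variables (T T' : finType) (le : rel T) (le' : rel T') (phi : T' -> T) (t : T).
Hypothesis phi_inj : injective phi.
Hypothesis phi_cov : forall x, x != t -> exists y, phi y = x.
Hypothesis phi_nt : forall y, phi y != t.
Hypothesis phi_le : forall a b, le' a b = le (phi a) (phi b).
Hypothesis t_max : forall x, le t x -> x = t.

Definition gpre (R : {set T * T}) : {set T' * T'} :=
  [set p | (phi p.1, phi p.2) \in R].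
Definition fext (R' : {set T' * T'}) : {set T * T} :=
  [set p | (p.2 == t) || [exists a, exists b, (p == (phi a, phi b)) && ((a, b) \in R')]].

Lemma fext_phi R' a b : ((phi a, phi b) \in fext R') = ((a, b) \in R').
Proof.
rewrite inE /= (negbTE (phi_nt b)) /=; apply/existsP/idP.
- case=> a' /existsP [b'] /andP [/eqP [/phi_inj -> /phi_inj ->]] //.
- by move=> H; exists a; apply/existsP; exists b; rewrite eqxx H.
Qed.

Lemma fext_t R' x : (x, t) \in fext R'.
Proof. by rewrite inE /= eqxx. Qed.

Lemma fext_t2 R' b : (t, phi b) \in fext R' = false.
Proof.
rewrite inE /= (negbTE (phi_nt b)) /=; apply/negbTE/existsP.
by case=> a /existsP [b'] /andP [/eqP [E _] _]; move: (phi_nt a); rewrite -E eqxx.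
Qed.

Lemma card_lin_remove :
  #|[pred R : {set T * T} | is_linearization le R && topR R t]| =
  #|[pred R : {set T' * T'} | is_linearization le' R]|.
Proof.
have cov x : x = t \/ exists a, x = phi a.
  by case: (eqVneq x t) => [->|/phi_cov [a <-]]; [left|right; exists a].
rewrite -(card_in_imset (f := gpre)); last first.
  move=> R1 R2; rewrite !inE => /andP [/linE [a1 a2 a3 a4 a5] T1] /andP [/linE [b1 b2 b3 b4 b5] T2] E.
  apply/setP=> [[x y]].
  have [->|[b ->]] := cov y.
    by rewrite (forallP T1 x) (forallP T2 x).
  have [->|[a ->]] := cov x.
    have n1 : (t, phi b) \notin R1.
      by apply/negP=> H; move: (phi_nt b); rewrite (a2 _ _ H (forallP T1 _)) eqxx.
    have n2 : (t, phi b) \notin R2.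
      by apply/negP=> H; move: (phi_nt b); rewrite (b2 _ _ H (forallP T2 _)) eqxx.
    by rewrite (negbTE n1) (negbTE n2).
  by move/setP: E => /(_ (a, b)); rewrite !inE.
apply: eq_card => R'; rewrite inE /=; apply/imsetP/idP.
- case=> R; rewrite inE => /andP [/linE [h1 h2 h3 h4 h5] _] ->.
  apply: linI.
  + by move=> x; rewrite inE h1.
  + by move=> x y; rewrite !inE /= => H1 H2; apply: phi_inj; exact: h2.
  + by move=> x y z; rewrite !inE /=; exact: h3.
  + by move=> x y; rewrite !inE /=.
  + by move=> x y; rewrite phi_le inE /=; exact: h5.
- move=> HR'; case/linE: (HR') => h1 h2 h3 h4 h5.
  exists (fext R').
    rewrite inE; apply/andP; split; last by apply/forallP=> y; exact: fext_t.
    apply: linI.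
    + move=> x; have [->|[a ->]] := cov x; first exact: fext_t.
      by rewrite fext_phi.
    + move=> x y; have [->|[b ->]] := cov y.
        have [->|[a ->]] := cov x; first by [].
        by rewrite fext_t2.
      have [->|[a ->]] := cov x; first by rewrite fext_t2.
      by rewrite !fext_phi => H1 H2; rewrite (h2 _ _ H1 H2).
    + move=> x y z; have [->|[c ->]] := cov z; first by move=> _ _; rewrite fext_t.
      have [->|[b ->]] := cov y; first by rewrite fext_t2.
      have [->|[a ->]] := cov x; first by rewrite fext_t2.
      rewrite !fext_phi; exact: h3.
    + move=> x y; have [->|[b ->]] := cov y; first by rewrite fext_t.
      have [->|[a ->]] := cov x; first by rewrite fext_t orbT.
      by rewrite !fext_phi.
    + move=> x y; have [->|[b ->]] := cov y; first by rewrite fext_t.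
      have [->|[a ->]] := cov x.
        by move/t_max=> E; move: (phi_nt b); rewrite E eqxx.
      by rewrite -phi_le fext_phi; exact: h5.
  apply/setP=> [[a b]]; by rewrite inE /= fext_phi.
Qed.

End Remove.

Section Lex.
Variables (m0 : nat) (le0 : rel 'I_m0).

Definition upd (m : 'I_m0 -> nat) s n : 'I_m0 -> nat := fun i => if i == s then n else m i.
Definition dec (m : 'I_m0 -> nat) i := upd m i (m i).-1.
Definition Mset (m : 'I_m0 -> nat) i :=
  (0 < m i) && [forall j, (0 < m j) && (j != i) ==> ~~ le0 i j].

Lemma sig_eq (f : 'I_m0 -> nat) (x y : {i : 'I_m0 & 'I_(f i)}) :
  tag x = tag y -> (tagged x : nat) = tagged y -> x = y.
Proof. by case: x => i a; case: y => j b /= E; subst j => E; congr existT; apply: val_inj. Qed.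

Lemma dec_le m i j : dec m i j <= m j.
Proof. by rewrite /dec /upd; case: eqP => [->|]; rewrite ?leq_pred. Qed.

Lemma maxl_lex m (x : lexsum_carrier m) :
  maxl (@lexsum_le m0 le0 m) x = ((tagged x : nat) == (m (tag x)).-1) && Mset m (tag x).
Proof.
case: x => i k /=; apply/idP/idP.
- move/forallP=> Hm.
  have Hk := ltn_ord k.
  apply/andP; split.
    apply/eqP; apply/eqP; apply: contraT => Hne.
    have H1 : k.+1 < m i by move/eqP: Hne; lia.
    move: (Hm (existT _ i (Ordinal H1))); rewrite /lexsum_le /= eqxx /= leqnSn /=.
    move/eqP=> E; have := congr1 (fun z : lexsum_carrier m => (tagged z : nat)) E.
    by move=> /= /eqP; rewrite eqn_leq ltnn.
  apply/andP; split; first by apply: leq_ltn_trans Hk.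
  apply/forallP=> j; apply/implyP=> /andP [Hj Hji]; apply/negP=> Hle.
  move: (Hm (existT _ j (Ordinal Hj))); rewrite /lexsum_le /= eq_sym Hji Hle /=.
  by move/eqP=> E; have := congr1 (fun z : lexsum_carrier m => tag z) E; move=> /= Eji; move: Hji; rewrite Eji eqxx.
- case/andP=> /eqP Hk /andP [_ /forallP HM]; apply/forallP=> y; apply/implyP.
  case: y => j l; rewrite /lexsum_le /=; case/orP.
  + case/andP=> Hij Hle; move: (HM j); rewrite eq_sym Hij andbT Hle /= implybF.
    by move: (ltn_ord l) => /(leq_ltn_trans (leq0n _)) ->.
  + case/andP=> /eqP Eij; subst j => Hkl; apply/eqP; apply: sig_eq => //=.
    have := ltn_ord l; move: Hkl Hk; simpl; lia.
Qed.

Definition phi m i (x : lexsum_carrier (dec m i)) : lexsum_carrier m :=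
  existT (fun j => 'I_(m j)) (tag x) (widen_ord (dec_le m i (tag x)) (tagged x)).

Lemma Lplus_rec m : (exists i, 0 < m i) ->
  Lplus le0 m = \sum_(i | Mset m i) Lplus le0 (dec m i).
Proof.
case=> i0 Hi0.
pose x0 : lexsum_carrier m := existT (fun j => 'I_(m j)) i0 (Ordinal Hi0).
rewrite /Lplus (card_lin_top _ x0).
rewrite (eq_bigr (fun x : lexsum_carrier m => Lplus le0 (dec m (tag x)))); last first.
  move=> x Hx; have := Hx; rewrite maxl_lex => /andP [/eqP Hk HM].
  rewrite /Lplus; apply: (card_lin_remove (phi := @phi m (tag x))).
  - move=> a b E; apply: sig_eq.
      exact: (congr1 (fun z : lexsum_carrier m => tag z) E).
    exact: (congr1 (fun z : lexsum_carrier m => (tagged z : nat)) E).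
  - case: x Hx Hk HM => i k /= Hx Hk HM [j l] Hne.
    have Hl : l < dec m i j.
      rewrite /dec /upd; case: eqP => [E|]; last by move=> _; exact: ltn_ord.
      subst j; rewrite -Hk ltn_neqAle; apply/andP; split.
        apply/negP=> /eqP E; move: Hne; rewrite (@sig_eq m (existT _ i l) (existT _ i k)) ?eqxx //.
      by rewrite Hk -ltnS prednK ?ltn_ord //; apply: leq_ltn_trans (leq0n _) (ltn_ord l).
    exists (existT (fun j' => 'I_(dec m i j')) j (Ordinal Hl)).
    by apply: sig_eq.
  - case: x Hx Hk HM => i k /= Hx Hk HM [j l]; apply/negP => /eqP E.
    have Ej := congr1 (fun z : lexsum_carrier m => tag z) E; simpl in Ej; subst j.
    have := congr1 (fun z : lexsum_carrier m => (tagged z : nat)) E => /= El.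
    have Ed : dec m i i = (m i).-1 by rewrite /dec /upd eqxx.
    have Hl : (l : nat) < (m i).-1 by have := ltn_ord l; rewrite [X in _ < X]Ed.
    by move: Hl; rewrite El Hk ltnn.
  - by [].
  - move=> y Hy; move/forallP: Hx => /(_ y) /implyP /(_ Hy) /eqP //.
rewrite (partition_big (fun x : lexsum_carrier m => tag x) (Mset m)); last first.
  by move=> x; rewrite maxl_lex => /andP [].
apply: eq_bigr => i Hi.
have Hmi : (m i).-1 < m i by rewrite ltn_predL; case/andP: Hi.
pose xi : lexsum_carrier m := existT (fun j => 'I_(m j)) i (Ordinal Hmi).
rewrite (big_pred1 xi) //.
move=> x /=; rewrite maxl_lex; apply/idP/idP.
- case/andP=> /andP [/eqP Hk _] /eqP Et; apply/eqP; apply: sig_eq => //=.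
  by rewrite Hk Et.
- by move/eqP=> ->; rewrite /xi /= !eqxx andbT /=.
Qed.

Lemma Lplus_zero m : (forall i, m i = 0) -> Lplus le0 m = 1.
Proof.
move=> H0.
have E : forall x : lexsum_carrier m, False.
  by case=> i k; have := ltn_ord k; rewrite [X in _ < X]H0.
rewrite /Lplus (eq_card (B := pred1 set0)); first by rewrite card1.
move=> R; rewrite inE /=.
have -> : R = set0 by apply/setP=> [[x y]]; case: (E x).
apply/idP/idP => _; last by apply: linI => x; case: (E x).
by apply/eqP.
Qed.

End Lex.

Import GRing.Theory Num.Theory.

Local Open Scope ring_scope.

Definition D1 (g : nat -> rat) : nat -> rat := fun n => g n.+1 - g n.
Definition fz k (g : nat -> rat) := forall n, iter k D1 g n = 0.

Lemma iterD1_ext f g : (forall n, f n = g n) -> forall k n, iter k D1 f n = iter k D1 g n.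
Proof. by move=> H; elim=> //= k IH n; rewrite /D1 !IH. Qed.

Lemma iterD1_sum (I : finType) (P : pred I) (F : I -> nat -> rat) k n :
  iter k D1 (fun n => \sum_(i | P i) F i n) n = \sum_(i | P i) iter k D1 (F i) n.
Proof. by elim: k n => //= k IH n; rewrite /D1 !IH sumrB. Qed.

Lemma iterD1_shift f k n : iter k D1 (fun n => f n.+1) n = iter k D1 f n.+1.
Proof. by elim: k n => //= k IH n; rewrite /D1 !IH. Qed.

Lemma iterD1_zero f k n : (forall n, f n = 0) -> iter k D1 f n = 0.
Proof. by move=> H; elim: k n => //= k IH n; rewrite /D1 !IH subrr. Qed.

Lemma fz_mono k l f : (k <= l)%N -> fz k f -> fz l f.
Proof.
move=> Hkl H n; rewrite -(subnK Hkl) iterD; apply: iterD1_zero; exact: H.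
Qed.

Lemma fz_ext k f g : (forall n, f n = g n) -> fz k f -> fz k g.
Proof. by move=> E H n; rewrite -(iterD1_ext E). Qed.

Lemma fz_sum (I : finType) (P : pred I) (F : I -> nat -> rat) k :
  (forall i, P i -> fz k (F i)) -> fz k (fun n => \sum_(i | P i) F i n).
Proof. by move=> H n; rewrite iterD1_sum big1 // => i Hi; apply: H. Qed.

Lemma fz_step k g h : fz k h -> (forall n, g n.+1 = g n + h n.+1) -> fz k.+1 g.
Proof.
move=> Hh E n; rewrite iterSr.
rewrite (@iterD1_ext (D1 g) (fun n => h n.+1)); last by move=> j; rewrite /D1 E addrC addKr.
by rewrite iterD1_shift.
Qed.

Section LA.
Variables (m0 : nat) (le0 : rel 'I_m0).
Hypothesis le_refl : reflexive le0.
Hypothesis le_anti : antisymmetric le0.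
Hypothesis le_trans : transitive le0.
Variable s : 'I_m0.

Definition eps (m : 'I_m0 -> nat) := [forall j, (0 < m j)%N && (j != s) ==> ~~ le0 s j].
Definition Mo (m : 'I_m0 -> nat) i :=
  [&& (0 < m i)%N, ~~ le0 i s & [forall j, [&& (0 < m j)%N, (j != i) & (j != s)] ==> ~~ le0 i j]].
Definition Imeas (m : 'I_m0 -> nat) := (\sum_(j | ~~ le0 j s && ~~ le0 s j) m j)%N.
Definition Wm (m : 'I_m0 -> nat) := (\sum_(j | j != s) m j)%N.

Lemma upd_upd m a b : upd (upd m s a) s b = upd m s b.
Proof. by apply: functional_extensionality => j; rewrite /upd; case: eqP. Qed.

Lemma dec_upd m i n : i != s -> dec (upd m s n) i = upd (dec m i) s n.
Proof.
move=> Hi; apply: functional_extensionality => j; rewrite /dec /upd (negbTE Hi).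
case: (eqVneq j i) => [->|]; first by rewrite (negbTE Hi).
by [].
Qed.

Lemma Mo_s m : Mo m s = false.
Proof. by rewrite /Mo le_refl andbF. Qed.

Lemma Mo_neq m i : Mo m i -> i != s.
Proof. by case/and3P=> _ H _; apply: contraNneq H => ->; rewrite le_refl. Qed.

Lemma Mset_upd_s m n : Mset le0 (upd m s n.+1) s = eps m.
Proof.
rewrite /Mset /upd /= eqxx /=; apply: eq_forallb => j.
by case: eqP => [->|//]; rewrite !andbF.
Qed.

Lemma Mset_upd_i m n i : i != s -> Mset le0 (upd m s n.+1) i = Mo m i.
Proof.
move=> Hi; rewrite /Mset /Mo /upd (negbTE Hi); apply/idP/idP.
- case/andP=> Hm /forallP H; rewrite Hm /=; apply/andP; split.
    by move: (H s); rewrite eqxx eq_sym Hi.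
  apply/forallP=> j; apply/implyP=> /and3P [Hj Hji Hjs].
  by move: (H j); rewrite (negbTE Hjs) Hj Hji.
- case/and3P=> Hm Hs /forallP H; rewrite Hm /=; apply/forallP=> j.
  case: (eqVneq j s) => [->|Hjs]; first by rewrite eq_sym Hi.
  by move: (H j); rewrite Hjs andbT.
Qed.

Lemma dec_upd_s m n : dec (upd m s n.+1) s = upd m s n.
Proof. rewrite /dec; have -> : upd m s n.+1 s = n.+1 by rewrite /upd eqxx.
by rewrite upd_upd. Qed.

Lemma rec_step m n : Lplus le0 (upd m s n.+1) =
  ((if eps m then Lplus le0 (upd m s n) else 0) +
   \sum_(i | Mo m i) Lplus le0 (upd (dec m i) s n.+1))%N.
Proof.
rewrite Lplus_rec; last by exists s; rewrite /upd eqxx.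
rewrite big_mkcond (bigD1 s) //=.
rewrite Mset_upd_s dec_upd_s; congr (_ + _)%N.
rewrite [RHS]big_mkcond [RHS](bigD1 s) //=.
rewrite Mo_s add0n.
by apply: eq_bigr => i Hi; rewrite Mset_upd_i // dec_upd.
Qed.

Lemma rec_zero m : ~~ eps m -> Lplus le0 (upd m s 0) =
   (\sum_(i | Mo m i) Lplus le0 (upd (dec m i) s 0))%N.
Proof.
move=> He; have [j0 Hj0] : exists j0, [&& (0 < m j0)%N, j0 != s & le0 s j0].
  move/forallPn: He => [j]; rewrite negb_imply negbK => /andP [/andP [a b] c].
  by exists j; rewrite a b c.
case/and3P: Hj0 => Hm0 Hs0 Hl0.
rewrite Lplus_rec; last by exists j0; rewrite /upd (negbTE Hs0).
rewrite big_mkcond (bigD1 s) //= {1}/Mset {1}/upd eqxx /= add0n.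
rewrite [RHS]big_mkcond [RHS](bigD1 s) //= Mo_s add0n.
apply: eq_bigr => i Hi; rewrite dec_upd //; congr (if _ then _ else _).
rewrite /Mset /Mo /upd (negbTE Hi); apply/idP/idP.
- case/andP=> Hm /forallP H; rewrite Hm /=; apply/andP; split.
    apply/negP=> Hli.
    have Hij0 : j0 != i.
      by apply/negP=> /eqP E; subst j0; move: Hi; rewrite (@le_anti i s (introT andP (conj Hli Hl0))) eqxx.
    by move: (H j0); rewrite (negbTE Hs0) Hm0 Hij0 (le_trans Hli Hl0).
  apply/forallP=> j; apply/implyP=> /and3P [Hj Hji Hjs].
  by move: (H j); rewrite (negbTE Hjs) Hj Hji.
- case/and3P=> Hm Hs /forallP H; rewrite Hm /=; apply/forallP=> j.
  case: (eqVneq j s) => [->|Hjs]; first by [].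
  by move: (H j); rewrite Hjs andbT.
Qed.

Lemma Imeas_dec_le m i : (Imeas (dec m i) <= Imeas m)%N.
Proof. by apply: leq_sum => j _; exact: dec_le. Qed.

Lemma Imeas_dec m i : Mo m i -> eps m -> (Imeas (dec m i)).+1 = Imeas m.
Proof.
move=> HM He; have Hi := Mo_neq HM; case/and3P: HM => Hm Hls _.
have Hsl : ~~ le0 s i by move/forallP: He => /(_ i); rewrite Hm Hi.
rewrite /Imeas (bigD1 i) /=; last by rewrite Hls Hsl.
rewrite [X in _ = X](bigD1 i) /=; last by rewrite Hls Hsl.
rewrite -addSn {1}/dec /upd eqxx prednK //; congr (_ + _)%N.
by apply: eq_bigr => j /andP [_ Hj]; rewrite /dec /upd (negbTE Hj).
Qed.

Lemma Wm_dec m i : Mo m i -> (Wm (dec m i) < Wm m)%N.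
Proof.
move=> HM; have Hi := Mo_neq HM; case/and3P: HM => Hm _ _.
rewrite /Wm (bigD1 i) //= [X in (_ < X)%N](bigD1 i) //=.
rewrite {1}/dec /upd eqxx.
have -> : (\sum_(j | (j != s) && (j != i)) dec m i j = \sum_(j | (j != s) && (j != i)) m j)%N.
  by apply: eq_bigr => j /andP [_ Hj]; rewrite /dec /upd (negbTE Hj).
by rewrite ltn_add2r ltn_predL.
Qed.

Lemma Wm_pos m i : Mo m i -> (0 < Wm m)%N.
Proof.
move=> HM; have Hi := Mo_neq HM; case/and3P: HM => Hm _ _.
by rewrite /Wm (bigD1 i) //= (leq_trans Hm) // leq_addr.
Qed.

Definition gL (m : 'I_m0 -> nat) n : rat := (Lplus le0 (upd m s n))%:R.

Lemma fzL_step m : (forall i, Mo m i -> fz (Imeas (dec m i)).+1 (gL (dec m i))) ->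
  fz (Imeas m).+1 (gL m).
Proof.
move=> IH.
pose h n := \sum_(i | Mo m i) gL (dec m i) n.
case E: (eps m).
- apply: (@fz_step _ _ h).
    apply: fz_sum => i Hi; rewrite -(Imeas_dec Hi E); exact: IH.
  by move=> n; rewrite /gL rec_step E natrD natr_sum.
- apply: (@fz_ext _ h).
    case=> [|n]; rewrite /gL.
      by rewrite rec_zero ?E // natr_sum.
    by rewrite rec_step E add0n natr_sum.
  apply: fz_sum => i Hi; apply: fz_mono (IH i Hi).
  by rewrite ltnS Imeas_dec_le.
Qed.

Lemma fzL m : fz (Imeas m).+1 (gL m).
Proof.
move: {2}(Wm m) (leqnn (Wm m)) => w; elim: w m => [|w IH] m Hw; apply: fzL_step => i Hi.
- by move: (Wm_pos Hi); rewrite lt0n; move: Hw; rewrite leqn0 => ->.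
- apply: IH; rewrite -ltnS; exact: leq_trans (Wm_dec Hi) Hw.
Qed.

End LA.

Import GRing.Theory Num.Theory.

Local Open Scope ring_scope.

Lemma pascal_sum (b : nat -> rat) n :
  \sum_(j < n.+1) ('C(n, j))%:R * b j + \sum_(j < n.+1) ('C(n, j))%:R * b j.+1 =
  \sum_(j < n.+2) ('C(n.+1, j))%:R * b j.
Proof.
rewrite [RHS]big_ord_recl.
under [in RHS]eq_bigr do rewrite lift0 binS natrD mulrDl.
rewrite big_split /=.
rewrite [X in X + _ = _]big_ord_recl.
under [in X in X + _ = _]eq_bigr do rewrite lift0.
rewrite [X in _ = _ + (X + _)]big_ord_recr /= (bin_small (ltnSn n)) !bin0 mul0r addr0.
by rewrite addrA.
Qed.

Lemma newton (g : nat -> rat) n : forall k,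
  iter k D1 g n = \sum_(j < n.+1) ('C(n, j))%:R * iter (j + k) D1 g 0.
Proof.
elim: n => [|n IH] k.
  by rewrite big_ord1 bin0 mul1r add0n.
have E : iter k D1 g n.+1 = iter k D1 g n + iter k.+1 D1 g n by rewrite /= /D1 addrC subrK.
rewrite E IH IH -(pascal_sum (fun j => iter (j + k) D1 g 0)).
congr (_ + _); apply: eq_bigr => j _; by rewrite addSn addnS.
Qed.

Lemma sum_trunc (t : nat -> rat) a N : (a <= N)%N -> (forall j, (a <= j)%N -> t j = 0) ->
  \sum_(j < a) t j = \sum_(j < N) t j.
Proof.
move=> HaN Ht; rewrite (big_ord_widen N t HaN) big_mkcond; apply: eq_bigr => j _.
by case: ifP => // /negbT; rewrite -leqNgt => /Ht ->.
Qed.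

Lemma newton_fz g D : fz D.+1 g -> forall n,
  g n = \sum_(j < D.+1) ('C(n, j))%:R * iter j D1 g 0.
Proof.
move=> Hg n; have := newton g n 0; rewrite /= => ->.
pose t j := ('C(n, j))%:R * iter j D1 g 0.
rewrite (eq_bigr (fun j : 'I_n.+1 => t j)); last by move=> j _; rewrite addn0.
rewrite (@sum_trunc t n.+1 (n.+1 + D.+1)) ?leq_addr //; last first.
  by move=> j Hj; rewrite /t bin_small ?mul0r.
rewrite (@sum_trunc t D.+1 (n.+1 + D.+1)) ?leq_addl //.
by move=> j Hj; rewrite /t (fz_mono Hj Hg) mulr0.
Qed.

Section Poly.
Variables (m0 : nat) (S : {set 'I_m0}).

Definition polyd d (F : ('I_m0 -> nat) -> rat) :=
  exists c : {ffun {ffun 'I_m0 -> 'I_d.+1} -> rat}, forall m, F m = poly_eval S c m.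
Definition ispoly F := exists d, polyd d F.

Lemma polyd_ext d F G : (forall m, F m = G m) -> polyd d F -> polyd d G.
Proof. by move=> E [c Hc]; exists c => m; rewrite -E. Qed.

Lemma polyd_const d k : polyd d (fun _ => k).
Proof.
pose e0 : {ffun 'I_m0 -> 'I_d.+1} := [ffun _ => ord0].
exists [ffun e => if e == e0 then k else 0] => m.
rewrite /poly_eval (bigD1 e0) //=.
rewrite [X in _ = _ + X]big1; last by move=> e /negbTE He; rewrite ffunE He mul0r.
rewrite addr0 ffunE eqxx big1 ?mulr1 // => i _; by rewrite ffunE expr0.
Qed.

Lemma polyd_var s : s \in S -> polyd 1 (fun m => (m s)%:R).
Proof.
move=> Hs.
pose e1 : {ffun 'I_m0 -> 'I_2} := [ffun i => if i == s then ord_max else ord0].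
exists [ffun e => if e == e1 then 1 else 0] => m.
rewrite /poly_eval (bigD1 e1) //=.
rewrite [X in _ = _ + X]big1; last by move=> e /negbTE He; rewrite ffunE He mul0r.
rewrite addr0 ffunE eqxx mul1r (bigD1 s) //=.
rewrite [X in _ = _ * X]big1; last by move=> i /andP [_ Hi]; rewrite ffunE (negbTE Hi) expr0.
by rewrite mulr1 ffunE eqxx expr1.
Qed.

Lemma polyd_add d F G : polyd d F -> polyd d G -> polyd d (fun m => F m + G m).
Proof.
move=> [c1 H1] [c2 H2]; exists [ffun e => c1 e + c2 e] => m.
rewrite H1 H2 /poly_eval -big_split; apply: eq_bigr => e _.
by rewrite ffunE mulrDl.
Qed.

Lemma polyd_mul d1 d2 F G : polyd d1 F -> polyd d2 G -> polyd (d1 + d2) (fun m => F m * G m).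
Proof.
move=> [c1 H1] [c2 H2].
pose sumE (e1 : {ffun 'I_m0 -> 'I_d1.+1}) (e2 : {ffun 'I_m0 -> 'I_d2.+1}) :
  {ffun 'I_m0 -> 'I_(d1 + d2).+1} := [ffun i => inord (e1 i + e2 i)].
exists [ffun E => \sum_e1 \sum_(e2 | sumE e1 e2 == E) c1 e1 * c2 e2] => m.
rewrite H1 H2 /poly_eval mulr_suml.
under [RHS]eq_bigr do rewrite ffunE mulr_suml.
rewrite [RHS]exchange_big /=; apply: eq_bigr => e1 _.
under [RHS]eq_bigr do rewrite mulr_suml.
rewrite mulr_sumr.
rewrite [RHS](exchange_big_dep predT) //=; apply: eq_bigr => e2 _.
rewrite (big_pred1 (sumE e1 e2)); last by move=> E; rewrite /= eq_sym.
have -> : \prod_(i in S) ((m i)%:R : rat) ^+ sumE e1 e2 i =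
  \prod_(i in S) ((m i)%:R : rat) ^+ e1 i * \prod_(i in S) ((m i)%:R : rat) ^+ e2 i.
  rewrite -big_split; apply: eq_bigr => i _; rewrite ffunE inordK ?exprD //.
  by rewrite ltnS leq_add // -ltnS ltn_ord.
by rewrite mulrACA.
Qed.

Lemma ispoly_const k : ispoly (fun _ => k).
Proof. by exists 0%N; apply: polyd_const. Qed.

Lemma ispoly_var s : s \in S -> ispoly (fun m => (m s)%:R).
Proof. by move=> Hs; exists 1%N; apply: polyd_var. Qed.

Lemma ispoly_mul F G : ispoly F -> ispoly G -> ispoly (fun m => F m * G m).
Proof. by move=> [d1 H1] [d2 H2]; exists (d1 + d2)%N; apply: polyd_mul. Qed.

Lemma ispoly_add F G : ispoly F -> ispoly G -> ispoly (fun m => F m + G m).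
Proof.
move=> [d1 H1] [d2 H2]; exists (d1 + d2)%N; apply: polyd_add.
  apply: (polyd_ext (F := fun m => F m * 1)); first by move=> m; rewrite mulr1.
  by apply: polyd_mul => //; apply: polyd_const.
apply: (polyd_ext (F := fun m => 1 * G m)); first by move=> m; rewrite mul1r.
by apply: polyd_mul => //; apply: polyd_const.
Qed.

Lemma ispoly_ext F G : (forall m, F m = G m) -> ispoly F -> ispoly G.
Proof. by move=> E [d H]; exists d; apply: polyd_ext H. Qed.

Lemma ispoly_sum n (F : nat -> ('I_m0 -> nat) -> rat) :
  (forall j, (j < n)%N -> ispoly (F j)) -> ispoly (fun m => \sum_(j < n) F j m).
Proof.
elim: n => [|n IH] H.
  by apply: (ispoly_ext (F := fun _ => 0)); [move=> m; rewrite big_ord0 | apply: ispoly_const].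
apply: (ispoly_ext (F := fun m => \sum_(j < n) F j m + F n m)).
  by move=> m; rewrite big_ord_recr.
apply: ispoly_add; last exact: H.
by apply: IH => j Hj; apply: H; apply: ltnW.
Qed.

Lemma ispoly_prod n (F : nat -> ('I_m0 -> nat) -> rat) :
  (forall j, (j < n)%N -> ispoly (F j)) -> ispoly (fun m => \prod_(j < n) F j m).
Proof.
elim: n => [|n IH] H.
  by apply: (ispoly_ext (F := fun _ => 1)); [move=> m; rewrite big_ord0 | apply: ispoly_const].
apply: (ispoly_ext (F := fun m => \prod_(j < n) F j m * F n m)).
  by move=> m; rewrite big_ord_recr.
apply: ispoly_mul; last exact: H.
by apply: IH => j Hj; apply: H; apply: ltnW.
Qed.

Lemma ffact_rat n j : ((n ^_ j)%:R : rat) = \prod_(i < j) (n%:R - i%:R).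
Proof.
elim: j => [|j IH]; first by rewrite ffactn0 big_ord0.
rewrite ffactnSr natrM IH big_ord_recr /=.
case: (leqP j n) => Hj; first by rewrite natrB.
by rewrite -IH ffact_small // !mul0r.
Qed.

Lemma bin_rat n j : (('C(n, j))%:R : rat) = (\prod_(i < j) (n%:R - i%:R)) * ((j`!)%:R)^-1.
Proof.
rewrite -ffact_rat -bin_ffact natrM mulfK //.
by rewrite pnatr_eq0 -lt0n fact_gt0.
Qed.

Lemma ispoly_bin s j : s \in S -> ispoly (fun m => ('C(m s, j))%:R).
Proof.
move=> Hs; apply: (ispoly_ext (F := fun m => (\prod_(i < j) ((m s)%:R - i%:R)) * ((j`!)%:R)^-1)).
  by move=> m; rewrite bin_rat.
apply: ispoly_mul; last exact: ispoly_const.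
apply: (ispoly_prod (F := fun i m => (m s)%:R - i%:R)) => i _.
apply: (ispoly_ext (F := fun m => (m s)%:R + (- i%:R))) => //.
by apply: ispoly_add; [apply: ispoly_var | apply: ispoly_const].
Qed.

End Poly.

Import GRing.Theory Num.Theory.

Local Open Scope ring_scope.


Section Multi.
Variables (m0 : nat) (S : {set 'I_m0}).

Definition Ds (s : 'I_m0) (F : ('I_m0 -> nat) -> rat) : ('I_m0 -> nat) -> rat :=
  fun m => F (upd m s (m s).+1) - F m.

Lemma upd_id (m : 'I_m0 -> nat) s : upd m s (m s) = m.
Proof. by apply: functional_extensionality => j; rewrite /upd; case: eqP => [->|]. Qed.
Lemma upd_same (m : 'I_m0 -> nat) s a b : upd (upd m s a) s b = upd m s b.
Proof. by apply: functional_extensionality => j; rewrite /upd; case: eqP. Qed.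
Lemma upd_at (m : 'I_m0 -> nat) s a : upd m s a s = a.
Proof. by rewrite /upd eqxx. Qed.
Lemma upd_ne (m : 'I_m0 -> nat) s a j : j != s -> upd m s a j = m j.
Proof. by rewrite /upd => /negbTE ->. Qed.
Lemma upd_comm (m : 'I_m0 -> nat) s t a b : s != t -> upd (upd m s a) t b = upd (upd m t b) s a.
Proof.
move=> Hst; apply: functional_extensionality => j; rewrite /upd.
case: (eqVneq j t) => [->|]; last by [].
by rewrite eq_sym (negbTE Hst).
Qed.

Lemma iterDs_upd F s j : forall k m,
  iter j (Ds s) F (upd m s k) = iter j D1 (fun k => F (upd m s k)) k.
Proof.
elim: j => [//|j IH] k m.
by rewrite /= /Ds /D1 upd_at upd_same !IH.
Qed.

Lemma Ds_comm s t F : s != t -> Ds t (Ds s F) = Ds s (Ds t F).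
Proof.
move=> Hst; have Hts : t != s by rewrite eq_sym.
apply: functional_extensionality => m; rewrite /Ds.
rewrite (upd_ne _ _ Hst) (upd_ne _ _ Hts).
rewrite (upd_comm _ _ _ Hst).
ring.
Qed.

Lemma iter_comm (A : Type) (f g : A -> A) : (forall x, f (g x) = g (f x)) ->
  forall a b x, iter a f (iter b g x) = iter b g (iter a f x).
Proof.
move=> H.
have H1 : forall b x, f (iter b g x) = iter b g (f x).
  by elim=> [//|b IH] x; rewrite /= H IH.
elim=> [//|a IH] b x; by rewrite /= IH H1.
Qed.

Lemma iter_Ds_zero s j : iter j (Ds s) (fun _ => 0) = fun _ => 0.
Proof.
elim: j => [//|j IH]; rewrite /= IH; apply: functional_extensionality => m.
by rewrite /Ds subrr.
Qed.

Lemma iter_Ds_shift t s k H : t != s ->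
  iter k (Ds t) (fun m => H (upd m s 0)) = fun m => iter k (Ds t) H (upd m s 0).
Proof.
move=> Hts; elim: k => [//|k IH]; rewrite /= IH; apply: functional_extensionality => m.
by rewrite /Ds (upd_ne _ _ Hts) (upd_comm _ _ _ Hts).
Qed.

Definition depT (T : {set 'I_m0}) (F : ('I_m0 -> nat) -> rat) :=
  forall m m', (forall i, i \in T -> m i = m' i) -> F m = F m'.

Lemma depT_Ds (s : 'I_m0) (T : {set 'I_m0}) (F : ('I_m0 -> nat) -> rat) : s \in T -> depT T F -> depT T (Ds s F).
Proof.
rewrite /depT => Hs HF m m' E; rewrite /Ds (HF m m' E).
have -> : F (upd m s (m s).+1) = F (upd m' s (m' s).+1).
  apply: HF; move=> i Hi; rewrite /upd; case: eqP => [_|_]; last exact: E.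
  by rewrite E.
by [].
Qed.

Lemma depT_iter (s : 'I_m0) (T : {set 'I_m0}) (F : ('I_m0 -> nat) -> rat) j : s \in T -> depT T F -> depT T (iter j (Ds s) F).
Proof. by move=> Hs HF; elim: j => [//|j IH] /=; apply: depT_Ds. Qed.

Lemma multi D : forall k (T : {set 'I_m0}), #|T| = k -> T \subset S -> forall F, depT T F ->
  (forall s, s \in T -> forall m, iter D.+1 (Ds s) F m = 0) -> ispoly S F.
Proof.
elim=> [|k IH] T HT HTS F HF HD.
  have E0 : T = set0 by apply/eqP; rewrite -cards_eq0 HT.
  apply: (@ispoly_ext _ S (fun _ => F (fun _ => 0%N))); last exact: ispoly_const.
  by move=> m; apply: HF => i; rewrite E0 inE.
have : T != set0 by rewrite -cards_eq0 HT.
case/set0Pn => s Hs.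
have HsS : s \in S := subsetP HTS s Hs.
pose G (j : nat) m := iter j (Ds s) F (upd m s 0).
apply: (@ispoly_ext _ S (fun m => \sum_(j < D.+1) ('C(m s, j))%:R * G j m)).
  move=> m.
  have Hfz : fz D.+1 (fun k => F (upd m s k)) by move=> n; rewrite -iterDs_upd HD.
  have := newton_fz Hfz (m s); rewrite /= upd_id => ->.
  by apply: eq_bigr => j _; rewrite /G iterDs_upd.
apply: (ispoly_sum (F := fun j m => ('C(m s, j))%:R * G j m)) => j _.
apply: ispoly_mul; first exact: ispoly_bin.
apply: (IH (T :\ s)).
- by move: (cardsD1 s T); rewrite Hs HT add1n => -[].
- exact: subset_trans (subsetDl _ _) HTS.
- move=> m m' E; apply: (depT_iter j Hs HF) => i Hi.
  rewrite /upd; case: eqP => // /eqP Hne; apply: E; by rewrite in_setD1 Hne Hi.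
- move=> t; rewrite in_setD1 => /andP [Hts Ht] m.
  rewrite /G (iter_Ds_shift _ _ Hts) iter_comm; last first.
    by move=> x; rewrite Ds_comm // eq_sym.
  have -> : iter D.+1 (Ds t) F = fun _ => 0.
    by apply: functional_extensionality => m1; apply: HD.
  by rewrite iter_Ds_zero.
Qed.

End Multi.

Import GRing.Theory Num.Theory.
Local Open Scope ring_scope.

Lemma chain_part m0 (le0 : rel 'I_m0) (S : {set 'I_m0}) :
  is_partial_order le0 -> is_chain le0 S -> forall mfix, Lplus_polynomial_in le0 S mfix.
Proof.
case=> refl [anti trans] HC mfix.
pose mix (m : 'I_m0 -> nat) i := if i \in S then m i else mfix i.
pose F m : rat := (Lplus le0 (mix m))%:R.
have HF : ispoly S F.
  apply: (@multi _ S (\sum_i mfix i)%N #|S| S) => //.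
  - move=> m m' E; rewrite /F; do 2 f_equal; apply: functional_extensionality => i.
    by rewrite /mix; case: ifP => // /E.
  - move=> s Hs m.
    rewrite -(upd_id m s) iterDs_upd.
    have -> : (fun k => F (upd m s k)) = gL le0 s (mix m).
      apply: functional_extensionality => k; rewrite /F /gL; do 2 f_equal.
      apply: functional_extensionality => i; rewrite /mix /upd.
      by case: eqP => [->|]; rewrite ?Hs.
    apply: (fz_mono _ (fzL refl anti trans s (mix m))).
    rewrite ltnS /Imeas big_mkcond /=; apply: leq_sum => j _.
    case: ifP => // /andP [a b]; rewrite /mix; case: ifP => // Hj.
    by move: (HC j s Hj Hs); rewrite (negbTE a) (negbTE b).
case: HF => d [c Hc]; exists d, c => m Hm.
rewrite -[in LHS](_ : mix m = m) -/(F m) ?Hc //.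
apply: functional_extensionality => i; rewrite /mix; case: ifP => // /negbT /Hm ->.
by [].
Qed.

Local Open Scope nat_scope.
Section Lower.
Variables (m0 : nat) (le0 : rel 'I_m0).
Hypothesis refl : reflexive le0.
Hypothesis anti : antisymmetric le0.
Hypothesis trans : transitive le0.

Lemma le_sum_term (m : 'I_m0 -> nat) i : m i <= \sum_j m j.
Proof. by rewrite (bigD1 i) //= leq_addr. Qed.

Lemma sum_dec (m : 'I_m0 -> nat) k : 0 < m k -> \sum_j dec m k j < \sum_j m j.
Proof.
move=> Hk; rewrite (bigD1 k) //= [X in _ < X](bigD1 k) //=.
rewrite {1}/dec /upd eqxx.
have -> : \sum_(j | j != k) dec m k j = \sum_(j | j != k) m j.
  by apply: eq_bigr => j Hj; rewrite /dec /upd (negbTE Hj).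
by rewrite ltn_add2r ltn_predL.
Qed.

Lemma max_above (m : 'I_m0 -> nat) : forall n k,
  #|[set j | (0 < m j) && le0 k j]| <= n -> 0 < m k -> exists k', Mset le0 m k' && le0 k k'.
Proof.
elim=> [|n IH] k Hn Hk.
  have : k \in [set j | (0 < m j) && le0 k j] by rewrite inE Hk refl.
  by move: Hn; rewrite leqn0 => /eqP/cards0_eq ->; rewrite inE.
case: (boolP (Mset le0 m k)) => HM; first by exists k; rewrite HM refl.
have [j /and3P [Hj Hjk Hkj]] : exists j, [&& 0 < m j, j != k & le0 k j].
  move: HM; rewrite /Mset Hk /= => /forallPn [j]; rewrite negb_imply negbK => /andP [/andP [a b] c].
  by exists j; rewrite a b c.
have Hlt : #|[set i | (0 < m i) && le0 j i]| < #|[set i | (0 < m i) && le0 k i]|.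
  apply: proper_card; apply/properP; split.
    apply/subsetP=> i; rewrite !inE => /andP [a b]; by rewrite a (trans Hkj b).
  exists k; rewrite !inE ?Hk ?refl //=.
  apply/negP=> Hjk'; move: Hjk; by rewrite (@anti j k (introT andP (conj Hjk' Hkj))) eqxx.
have Hjn : #|[set i | (0 < m i) && le0 j i]| <= n by rewrite -ltnS (leq_trans Hlt Hn).
have [k' /andP [H1 H2]] := IH j Hjn Hj.
by exists k'; rewrite H1 (trans Hkj H2).
Qed.

Lemma max_above' (m : 'I_m0 -> nat) k : 0 < m k -> exists k', Mset le0 m k' && le0 k k'.
Proof. exact: max_above (leqnn _). Qed.

Lemma Lplus_ge (m : 'I_m0 -> nat) k : Mset le0 m k -> Lplus le0 (dec m k) <= Lplus le0 m.
Proof.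
move=> HM; rewrite [X in _ <= X](@Lplus_rec _ le0 m); last by exists k; case/andP: HM.
by rewrite (bigD1 k) //= leq_addr.
Qed.

Lemma Lplus_ge2 (m : 'I_m0 -> nat) p q : p != q -> Mset le0 m p -> Mset le0 m q ->
  Lplus le0 (dec m p) + Lplus le0 (dec m q) <= Lplus le0 m.
Proof.
move=> Hpq Hp Hq; rewrite [X in _ <= X](@Lplus_rec _ le0 m); last by exists p; case/andP: Hp.
rewrite (bigD1 p) //= (bigD1 q) /=; last by rewrite Hq eq_sym Hpq.
by rewrite addnA leq_addr.
Qed.

Lemma Lplus_pos (m : 'I_m0 -> nat) : 0 < Lplus le0 m.
Proof.
move: {2}(\sum_j m j) (leqnn (\sum_j m j)) => w; elim: w m => [|w IH] m Hw.
  rewrite Lplus_zero // => i; apply/eqP; rewrite -leqn0; exact: leq_trans (le_sum_term m i) Hw.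
case: (boolP [exists i, 0 < m i]).
  case/existsP=> i Hi; have [k /andP [Hk _]] := max_above' Hi.
  apply: leq_trans (Lplus_ge Hk); apply: IH; rewrite -ltnS.
  by apply: leq_trans Hw; apply: sum_dec; case/andP: Hk.
move=> H; rewrite Lplus_zero // => i; apply/eqP; rewrite -leqn0 leqNgt.
by apply/negP=> Hi; apply: (negP H); apply/existsP; exists i.
Qed.

Variables p q : 'I_m0.
Hypothesis Hpq : ~~ le0 p q.
Hypothesis Hqp : ~~ le0 q p.

Lemma lower (m : 'I_m0 -> nat) : 'C(m p + m q, m q) <= Lplus le0 m.
Proof.
have pq : p != q by apply: contraNneq Hpq => ->; rewrite refl.
move: {2}(\sum_j m j) (leqnn (\sum_j m j)) => w; elim: w m => [|w IH] m Hw.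
  have -> : m p = 0 by apply/eqP; rewrite -leqn0; exact: leq_trans (le_sum_term m p) Hw.
  by rewrite add0n binn Lplus_pos.
case: (posnP (m p)) => [Hp0|Hp]; first by rewrite Hp0 add0n binn Lplus_pos.
case: (posnP (m q)) => [Hq0|Hq]; first by rewrite Hq0 addn0 bin0 Lplus_pos.
case: (boolP [exists i, [&& Mset le0 m i, i != p & i != q]]).
  case/existsP=> i /and3P [Hi Hip Hiq].
  apply: leq_trans (Lplus_ge Hi).
  have -> : m p = dec m i p by rewrite /dec /upd eq_sym (negbTE Hip).
  have -> : m q = dec m i q by rewrite /dec /upd eq_sym (negbTE Hiq).
  apply: IH; rewrite -ltnS; apply: leq_trans Hw; apply: sum_dec; by case/andP: Hi.
move=> Hno.
have HMp : Mset le0 m p.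
  have [k /andP [Hk Hpk]] := max_above' Hp.
  case: (eqVneq k p) => [<-//|Hkp]; case: (eqVneq k q) => [Ekq|Hkq].
    by move: Hpq; rewrite -Ekq Hpk.
  by move: Hno => /existsPn /(_ k); rewrite Hk Hkp Hkq.
have HMq : Mset le0 m q.
  have [k /andP [Hk Hqk]] := max_above' Hq.
  case: (eqVneq k q) => [<-//|Hkq]; case: (eqVneq k p) => [Ekp|Hkp].
    by move: Hqp; rewrite -Ekp Hqk.
  by move: Hno => /existsPn /(_ k); rewrite Hk Hkp Hkq.
apply: leq_trans (Lplus_ge2 pq HMp HMq).
have IHp := IH (dec m p) (leq_trans (sum_dec Hp) Hw).
have IHq := IH (dec m q) (leq_trans (sum_dec Hq) Hw).
move: IHp IHq; rewrite /dec /upd eqxx (negbTE pq) eq_sym (negbTE pq) eqxx.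
move: Hp Hq; case: (m p) => [//|a] _; case: (m q) => [//|b] _ /=.
move=> H1 H2; apply: leq_trans (leq_add H1 H2).
by rewrite addSn binS addnS addSn.
Qed.


End Lower.

Lemma ffact_lb k n : n ^ k <= (n + k) ^_ k.
Proof.
elim: k => [|k IH]; first by rewrite ffactn0.
rewrite addnS ffactSS expnS leq_mul //; first exact: leqW (leq_addr _ _).
Qed.

Lemma leq_expl a b e : a <= b -> a ^ e <= b ^ e.
Proof. by move=> H; elim: e => // e IH; rewrite !expnS leq_mul. Qed.

Local Open Scope ring_scope.
Import Order.TTheory.

Lemma nonchain m0 (le0 : rel 'I_m0) (S : {set 'I_m0}) :
  is_partial_order le0 -> ~ is_chain le0 S -> forall mfix, ~ Lplus_polynomial_in le0 S mfix.
Proof.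
case=> refl [anti trans] HnC mfix [d [c Hc]].
have [p [q [Hp Hq Hpq Hqp]]] : exists p q, [/\ p \in S, q \in S, ~~ le0 p q & ~~ le0 q p].
  case: (boolP [exists p, exists q, [&& p \in S, q \in S, ~~ le0 p q & ~~ le0 q p]]).
    by case/existsP=> p /existsP [q /and4P [a b e f]]; exists p, q.
  move=> H; exfalso; apply: HnC => x y Hx Hy; apply/negPn/negP; rewrite negb_or => /andP [a b].
  by apply: (negP H); apply/existsP; exists x; apply/existsP; exists y; rewrite Hx Hy a b.
pose E := (d * #|S|)%N.
pose K := (Num.bound (\sum_e `|c e|)).+1.
have HK : \sum_e `|c e| <= K%:R.
  apply: ltW; apply: lt_le_trans (archi_boundP (sumr_ge0 _ (fun e _ => normr_ge0 (c e)))) _.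
  by rewrite ler_nat.
pose n := ((K * (E.+1)`!).+1 + E)%N.
pose m i := if i == p then n else if i == q then E.+1 else if i \in S then 0%N else mfix i.
have Hm : forall i, i \notin S -> m i = mfix i.
  move=> i Hi; rewrite /m; case: eqP => [E1|_]; first by move: Hi; rewrite E1 Hp.
  case: eqP => [E1|_]; first by move: Hi; rewrite E1 Hq.
  by rewrite (negbTE Hi).
have Hmn : forall i, i \in S -> (m i <= n)%N.
  move=> i Hi; rewrite /m; case: eqP => // _; case: eqP => [_|_]; first by rewrite /n addSn ltnS leq_addl.
  by rewrite Hi.
have Hup : ((Lplus le0 m)%:R : rat) <= K%:R * n%:R ^+ E.
  rewrite Hc // /poly_eval.
  apply: le_trans (_ : \sum_e `|c e| * n%:R ^+ E <= _); last first.
    by rewrite -mulr_suml ler_wpM2r // exprn_ge0.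
  apply: ler_sum => e _.
  have H0 : 0 <= \prod_(i in S) ((m i)%:R : rat) ^+ e i by apply: prodr_ge0 => i _; apply: exprn_ge0.
  apply: le_trans (_ : `|c e| * \prod_(i in S) ((m i)%:R : rat) ^+ e i <= _).
    by apply: ler_wpM2r => //; apply: ler_norm.
  apply: ler_wpM2l => //.
  rewrite /E exprM -prodr_const; apply: ler_prod => i Hi; rewrite exprn_ge0 //=.
  rewrite -!natrX ler_nat.
  apply: leq_trans (_ : n ^ e i <= n ^ d)%N.
    exact: leq_expl (Hmn i Hi).
  apply: leq_pexp2l; first by rewrite /n addSn.
  by rewrite -ltnS ltn_ord.
have Hup' : (Lplus le0 m <= K * n ^ E)%N by rewrite -(ler_nat rat) natrM natrX.
have Hlo := lower refl anti trans Hpq Hqp m.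
have Emp : m p = n by rewrite /m eqxx.
have Emq : m q = E.+1.
  rewrite /m eqxx; case: eqP => // Eqp; by move: Hpq; rewrite Eqp refl.
rewrite Emp Emq in Hlo.
have Hff : (n ^ E.+1 <= 'C(n + E.+1, E.+1) * (E.+1)`!)%N by rewrite bin_ffact ffact_lb.
have : (n * n ^ E <= (K * (E.+1)`!) * n ^ E)%N.
  rewrite -expnS; apply: leq_trans Hff _.
  rewrite mulnAC; apply: leq_mul => //; exact: leq_trans Hlo Hup'.
rewrite leq_pmul2r; last by rewrite expn_gt0 /n addSn.
by rewrite /n addSn ltnNge leq_addr.
Qed.


Local Open Scope nat_scope.

Theorem theorem5p2 (m0 : nat) (le0 : rel 'I_m0) (S : {set 'I_m0}) :
  is_partial_order le0 ->
  (is_chain le0 S -> forall mfix : 'I_m0 -> nat, Lplus_polynomial_in le0 S mfix) /\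
  (~ is_chain le0 S -> forall mfix : 'I_m0 -> nat, ~ Lplus_polynomial_in le0 S mfix).
Proof.
move=> HP; split; [exact: chain_part | exact: nonchain].
Qed.
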